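(* Let $A$ and $B$ be $2\times 2$ matrices with strictly positive entries. Then \[ R(AB)\le \Phi\bigl(R(A),R(B)\bigr)=\left(\frac{1+\sqrt{R(A)R(B)}}{\sqrt{R(A)}+\sqrt{R(B)}}\right)^{2}. \]
   Context: For a $2\times2$ matrix $A=(a_{ij})$ with strictly positive entries, the oriented distortion is $F(A)=\frac{a_{11}a_{22}}{a_{12}a_{21}}$ and the distortion is $R(A)=\max\{F(A),1/F(A)\}$ (so $R(A)\ge 1$). The envelope function is $\Phi(\alpha,\beta)=\left(\frac{1+\sqrt{\alpha\beta}}{\sqrt{\alpha}+\sqrt{\beta}}\right)^2$ for $\alpha,\beta\ge 1$. *)

(* Defs.v *)
From mathcomp Require Import all_boot all_order all_algebra.
Set Implicit Arguments. Unset Strict Implicit. Unset Printing Implicit Defensive.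
Import Order.TTheory GRing.Theory Num.Theory.
Local Open Scope ring_scope.

Definition pos_mx (R : realFieldType) (A : 'M[R]_2) : Prop :=
  forall i j : 'I_2, 0 < A i j.

Definition odist (R : realFieldType) (A : 'M[R]_2) : R :=
  (A 0 0 * A 1 1) / (A 0 1 * A 1 0).

Definition dist (R : realFieldType) (A : 'M[R]_2) : R :=
  Num.max (odist A) (odist A)^-1.

Definition Phi (R : rcfType) (a b : R) : R :=
  ((1 + Num.sqrt (a * b)) / (Num.sqrt a + Num.sqrt b)) ^+ 2.

(* Main.v *)
Require Import Defs.
From mathcomp Require Import all_boot all_order all_algebra.
From mathcomp Require Import ring lra.
Set Implicit Arguments. Unset Strict Implicit. Unset Printing Implicit Defensive.
Import Order.TTheory GRing.Theory Num.Theory.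
Local Open Scope ring_scope.

Definition Fq (R : realFieldType) (u v t : R) :=
  (1+t)*(1+u*v*t)/((1+v*t)*(1+u*t)).

Lemma core_ab (R : realFieldType) (a b u v t : R) : 1<=a -> 1<=b -> 0<t ->
  (u = a^+2 \/ u = (a^+2)^-1) -> (v = b^+2 \/ v = (b^+2)^-1) ->
  Fq u v t <= ((1+a*b)/(a+b))^+2.
Proof.
move=> ha hb ht hu hv.
have a0 : a != 0 by apply/eqP => E; rewrite E in ha; lra.
have b0 : b != 0 by apply/eqP => E; rewrite E in hb; lra.
have ab0 : a + b != 0 by apply/eqP => E; lra.
have pa : 0 <= a^+2 - 1 by rewrite subr_ge0 expr2; nra.
have pb : 0 <= b^+2 - 1 by rewrite subr_ge0 expr2; nra.
have a2 : a^+2 != 0 by rewrite expf_neq0.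
have b2 : b^+2 != 0 by rewrite expf_neq0.
have t0 : t != 0 by rewrite gt_eqF.
have ga : 0 <= a^+2 by rewrite sqr_ge0.
have gb : 0 <= b^+2 by rewrite sqr_ge0.
have n1 : 1 + b^+2*t != 0 by rewrite gt_eqF // ltr_pwDl // mulr_ge0 // ltW.
have n2 : 1 + a^+2*t != 0 by rewrite gt_eqF // ltr_pwDl // mulr_ge0 // ltW.
have n3 : b^+2 + t != 0 by rewrite gt_eqF // ltr_wpDl.
have n4 : a^+2 + t != 0 by rewrite gt_eqF // ltr_wpDl.
have n5 : 1 + b^-2*t != 0 by rewrite gt_eqF // ltr_pwDl // mulr_ge0 ?invr_ge0 // ltW.
have n6 : 1 + a^-2*t != 0 by rewrite gt_eqF // ltr_pwDl // mulr_ge0 ?invr_ge0 // ltW.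
have p1 : 0 <= 1 + b^+2*t by rewrite addr_ge0 // mulr_ge0 // ltW.
have p2 : 0 <= 1 + a^+2*t by rewrite addr_ge0 // mulr_ge0 // ltW.
have p3 : 0 <= b^+2 + t by rewrite addr_ge0 // ltW.
have p4 : 0 <= a^+2 + t by rewrite addr_ge0 // ltW.
rewrite /Fq -subr_ge0.
case: hu => ->; case: hv => ->.
- have -> : ((1 + a * b) / (a + b)) ^+ 2 -
    (1 + t) * (1 + a ^+ 2 * b ^+ 2 * t) / ((1 + b ^+ 2 * t) * (1 + a ^+ 2 * t)) =
    (a^+2-1)*(b^+2-1)*(a*b*t-1)^+2/((a+b)^+2*(1+b^+2*t)*(1+a^+2*t)).
    by field; rewrite ?n1 ?n2 ?n3 ?n4 ?n5 ?n6 ?a0 ?b0 ?a2 ?b2 ?ab0 ?t0.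
  by apply: divr_ge0; [apply: mulr_ge0; [apply: mulr_ge0 | apply: sqr_ge0] | apply: mulr_ge0; [apply: mulr_ge0; [apply: sqr_ge0|] |]].
- have -> : ((1 + a * b) / (a + b)) ^+ 2 -
    (1 + t) * (1 + a ^+ 2 * (b ^+ 2)^-1 * t) / ((1 + (b ^+ 2)^-1 * t) * (1 + a ^+ 2 * t)) =
    (a^+2-1)*(b^+2-1)/(a+b)^+2 + t*(a^+2-1)*(b^+2-1)/((b^+2+t)*(1+a^+2*t)).
    by field; rewrite ?n1 ?n2 ?n3 ?n4 ?n5 ?n6 ?a0 ?b0 ?a2 ?b2 ?ab0 ?t0.
  by apply: addr_ge0; apply: divr_ge0; [apply: mulr_ge0| apply: sqr_ge0 | apply: mulr_ge0; [apply: mulr_ge0; [apply: ltW|] |] | apply: mulr_ge0].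
- have -> : ((1 + a * b) / (a + b)) ^+ 2 -
    (1 + t) * (1 + (a ^+ 2)^-1 * b ^+ 2 * t) / ((1 + b ^+ 2 * t) * (1 + (a ^+ 2)^-1 * t)) =
    (a^+2-1)*(b^+2-1)/(a+b)^+2 + t*(a^+2-1)*(b^+2-1)/((1+b^+2*t)*(a^+2+t)).
    by field; rewrite ?n1 ?n2 ?n3 ?n4 ?n5 ?n6 ?a0 ?b0 ?a2 ?b2 ?ab0 ?t0.
  by apply: addr_ge0; apply: divr_ge0; [apply: mulr_ge0| apply: sqr_ge0 | apply: mulr_ge0; [apply: mulr_ge0; [apply: ltW|] |] | apply: mulr_ge0].
- have -> : ((1 + a * b) / (a + b)) ^+ 2 -
    (1 + t) * (1 + (a ^+ 2)^-1 * (b ^+ 2)^-1 * t) / ((1 + (b ^+ 2)^-1 * t) * (1 + (a ^+ 2)^-1 * t)) =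
    (a^+2-1)*(b^+2-1)*(a*b-t)^+2/((a+b)^+2*(b^+2+t)*(a^+2+t)).
    by field; rewrite ?n1 ?n2 ?n3 ?n4 ?n5 ?n6 ?a0 ?b0 ?a2 ?b2 ?ab0 ?t0.
  by apply: divr_ge0; [apply: mulr_ge0; [apply: mulr_ge0 | apply: sqr_ge0] | apply: mulr_ge0; [apply: mulr_ge0; [apply: sqr_ge0|] |]].
Qed.

Lemma sqrt_case (R : rcfType) (u : R) : 0 < u ->
  1 <= Num.sqrt (Num.max u u^-1) /\
  (u = (Num.sqrt (Num.max u u^-1))^+2 \/ u = ((Num.sqrt (Num.max u u^-1))^+2)^-1).
Proof.
move=> u0.
have iu0 : 0 < u^-1 by rewrite invr_gt0.
have hU : 1 <= Num.max u u^-1.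
  rewrite le_max; case: (leP 1 u) => h //.
  by rewrite invr_ge1 ?unitfE ?gt_eqF // ltW // orbT.
have U0 : 0 <= Num.max u u^-1 by apply: le_trans hU.
split; first by rewrite -sqrtr1 ler_sqrt.
rewrite sqr_sqrtr //.
have [h|h] := leP u u^-1.
- by rewrite invrK; right.
- by left.
Qed.

Lemma core (R : rcfType) (u v t : R) : 0<u -> 0<v -> 0<t ->
  Fq u v t <= Phi (Num.max u u^-1) (Num.max v v^-1).
Proof.
move=> u0 v0 t0.
have [ha hu] := sqrt_case u0; have [hb hv] := sqrt_case v0.
rewrite /Phi sqrtrM; first exact: core_ab.
by rewrite le_max ltW.
Qed.

Theorem mainTheorem1 (R : rcfType) (A B : 'M[R]_2) :
  pos_mx A -> pos_mx B ->
  dist (A *m B) <= Phi (dist A) (dist B).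
Proof.
move=> hA hB.
have a0 := hA 0 0; have a1 := hA 0 1; have a2 := hA 1 0; have a3 := hA 1 1.
have b0 := hB 0 0; have b1 := hB 0 1; have b2 := hB 1 0; have b3 := hB 1 1.
have u0 : 0 < odist A by rewrite /odist divr_gt0 // mulr_gt0.
have v0 : 0 < odist B by rewrite /odist divr_gt0 // mulr_gt0.
have t0 : 0 < A 0 1 * B 1 0 / (A 0 0 * B 0 0) by rewrite divr_gt0 // mulr_gt0.
have E1 : odist (A *m B) = Fq (odist A) (odist B) (A 0 1 * B 1 0 / (A 0 0 * B 0 0)).
  rewrite /odist /Fq !mxE !big_ord_recl !big_ord0 /= !addr0.
  have -> : lift ord0 ord0 = 1 :> 'I_2 by apply/val_inj.
  have -> : ord0 = 0 :> 'I_2 by apply/val_inj.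
  field.
  by repeat (apply/andP; split); apply: lt0r_neq0; try apply: addr_gt0; try apply: mulr_gt0.
have E2 : (odist (A *m B))^-1 = Fq (odist A) (odist B)^-1 (odist B * (A 0 1 * B 1 0 / (A 0 0 * B 0 0))).
  rewrite /odist /Fq !mxE !big_ord_recl !big_ord0 /= !addr0.
  have -> : lift ord0 ord0 = 1 :> 'I_2 by apply/val_inj.
  have -> : ord0 = 0 :> 'I_2 by apply/val_inj.
  field.
  by repeat (apply/andP; split); apply: lt0r_neq0; try apply: addr_gt0; try apply: mulr_gt0.
have EB : Num.max (odist B) (odist B)^-1 = Num.max (odist B)^-1 (odist B)^-1^-1 by rewrite invrK maxC.
rewrite /dist ge_max E2 E1 core //=.
rewrite EB core //; first by rewrite invr_gt0.
by rewrite mulr_gt0.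
Qed.
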